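(* Let $(b(n))_{n\in\mathbb{N}}$ be a bounded sequence of complex numbers such that for every $\alpha\in[0,1]$, $$\lim_{M\to\infty}\limsup_{N\to\infty}\frac1N\sum_{n=1}^N\Big|\frac1M\sum_{m=1}^M e(m\alpha)\, b(Mn+m)\Big|=0.$$ Then $$\lim_{N\to\infty}\sup_{\alpha\in[0,1]}\Big|\frac1N\sum_{n=1}^N e(n\alpha)\, b(n)\Big|=0.$$
   Context: $e(t)=e^{2\pi i t}$ for $t\in\mathbb{R}$. *)

(* Defs.v *)
From Stdlib Require Import Reals.
From Coquelicot Require Import Coquelicot.
Open Scope R_scope.

Definition e (t : R) : C := (cos (2 * PI * t), sin (2 * PI * t)).

Definition inner_avg (b : nat -> C) (alpha : R) (M n : nat) : C :=
  scal (/ INR M) (sum_n_m (fun m => Cmult (e (INR m * alpha)) (b (M * n + m)%nat)) 1 M).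

Definition outer_avg (b : nat -> C) (alpha : R) (M N : nat) : R :=
  / INR N * sum_n_m (fun n => Cmod (inner_avg b alpha M n)) 1 N.

Definition exp_avg (b : nat -> C) (alpha : R) (N : nat) : C :=
  scal (/ INR N) (sum_n_m (fun n => Cmult (e (INR n * alpha)) (b n)) 1 N).

(* Main.v *)
Require Import Defs.
From Stdlib Require Import Reals Lra Lia Arith Classical ClassicalEpsilon.
From Coquelicot Require Import Coquelicot.
Open Scope R_scope.


Lemma scal_C (r : R) (c : C) : scal r c = Cmult (RtoC r) c.
Proof.
  destruct c as [x y]. unfold scal; simpl. unfold prod_scal, Cmult, RtoC; simpl.
  unfold scal; simpl. unfold mult; simpl. f_equal; ring.
Qed.

Lemma Cmod_scal (r : R) (c : C) : Cmod (scal r c) = Rabs r * Cmod c.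
Proof. rewrite scal_C, Cmod_mult, Cmod_R. reflexivity. Qed.

Lemma Cmod_sum (a : nat -> C) n m :
  Cmod (sum_n_m a n m) <= sum_n_m (fun k => Cmod (a k)) n m.
Proof.
  induction m.
  - destruct n.
    + rewrite !sum_n_n. lra.
    + rewrite !sum_n_m_zero by lia. unfold zero; simpl. rewrite Cmod_0. lra.
  - destruct (le_lt_dec n (S m)).
    + destruct (Nat.eq_dec n (S m)).
      * subst. rewrite !sum_n_n. lra.
      * rewrite !sum_n_Sm by lia.
        eapply Rle_trans. apply Cmod_triangle. change (plus ?x ?y) with (Rplus x y). lra.
    + rewrite !sum_n_m_zero by lia. unfold zero; simpl. rewrite Cmod_0. lra.
Qed.

Lemma sum_le_in (a b : nat -> R) n m :
  (forall k, (n <= k <= m)%nat -> a k <= b k) -> sum_n_m a n m <= sum_n_m b n m.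
Proof.
  intros H. induction m.
  - destruct n.
    + rewrite !sum_n_n. apply H; lia.
    + rewrite !sum_n_m_zero by lia. lra.
  - destruct (le_lt_dec n (S m)).
    + destruct (Nat.eq_dec n (S m)).
      * subst. rewrite !sum_n_n. apply H; lia.
      * rewrite !sum_n_Sm by lia. change (plus ?x ?y) with (Rplus x y).
        assert (a (S m) <= b (S m)) by (apply H; lia).
        assert (sum_n_m a n m <= sum_n_m b n m) by (apply IHm; intros; apply H; lia). lra.
    + rewrite !sum_n_m_zero by lia. lra.
Qed.

Lemma sum_const_le (a : nat -> R) n m c :
  (forall k, (n <= k <= m)%nat -> a k <= c) -> sum_n_m a n m <= INR (S m - n) * c.
Proof. intros H. rewrite <- sum_n_m_const. apply sum_le_in. exact H. Qed.

Lemma sum_shift {G : AbelianMonoid} (a : nat) : forall (g : nat -> G) n m,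
  sum_n_m g (a + n) (a + m) = sum_n_m (fun k => g (a + k)%nat) n m.
Proof.
  induction a; intros g n m.
  - simpl. reflexivity.
  - simpl. rewrite <- sum_n_m_S. rewrite (IHa (fun k => g (S k))). reflexivity.
Qed.

Lemma Cmod_e t : Cmod (e t) = 1.
Proof.
  unfold e, Cmod; simpl.
  pose proof (sin2_cos2 (2 * PI * t)). unfold Rsqr in H.
  replace (_ + _) with 1 by nra. apply sqrt_1.
Qed.

Lemma e_add x y : e (x + y) = Cmult (e x) (e y).
Proof.
  unfold e, Cmult; simpl. rewrite Rmult_plus_distr_l, cos_plus, sin_plus.
  f_equal; ring.
Qed.

Lemma Cmod_le_sum (c : C) : Cmod c <= Rabs (fst c) + Rabs (snd c).
Proof.
  destruct c as [x y]. unfold Cmod; simpl.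
  rewrite <- (sqrt_pow2 (Rabs x + Rabs y)) by (pose proof (Rabs_pos x); pose proof (Rabs_pos y); lra).
  apply sqrt_le_1_alt.
  pose proof (Rabs_pos x); pose proof (Rabs_pos y).
  assert (x*x = Rabs x * Rabs x) by (rewrite <- Rabs_mult; rewrite Rabs_right; nra).
  assert (y*y = Rabs y * Rabs y) by (rewrite <- Rabs_mult; rewrite Rabs_right; nra).
  simpl. nra.
Qed.

Lemma sin_lip a b : Rabs (sin b - sin a) <= Rabs (b - a).
Proof.
  destruct (MVT_abs sin cos a b) as [c [Hc _]].
  { intros; apply derivable_pt_lim_sin. }
  rewrite Hc. pose proof (COS_bound c). pose proof (Rabs_pos (b - a)).
  assert (Rabs (cos c) <= 1) by (apply Rabs_le; lra). nra.
Qed.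

Lemma cos_lip a b : Rabs (cos b - cos a) <= Rabs (b - a).
Proof.
  destruct (MVT_abs cos (fun x => - sin x) a b) as [c [Hc _]].
  { intros; apply derivable_pt_lim_cos. }
  rewrite Hc. pose proof (SIN_bound c). pose proof (Rabs_pos (b - a)).
  assert (Rabs (- sin c) <= 1) by (apply Rabs_le; lra). nra.
Qed.

Lemma e_lip x y : Cmod (Cminus (e x) (e y)) <= 4 * PI * Rabs (x - y).
Proof.
  eapply Rle_trans. apply Cmod_le_sum. unfold e, Cminus, Cplus, Copp; simpl.
  pose proof (cos_lip (2*PI*y) (2*PI*x)). pose proof (sin_lip (2*PI*y) (2*PI*x)).
  replace (2 * PI * x - 2 * PI * y) with (2 * PI * (x - y)) in * by ring.
  rewrite Rabs_mult in *. rewrite (Rabs_right (2 * PI)) in * by (pose proof PI_RGT_0; lra).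
  unfold Rminus in *. lra.
Qed.


Lemma Caux x y z : Cmult x z = Cplus (Cmult y z) (Cmult (Cminus x y) z).
Proof. ring. Qed.

Lemma INR_pos_inv M : (1 <= M)%nat -> Rabs (/ INR M) = / INR M.
Proof. intros. apply Rabs_right. apply Rle_ge, Rlt_le, Rinv_0_lt_compat, lt_0_INR; lia. Qed.

Lemma inner_bound b K (HK : forall n, Cmod (b n) <= K) a M q :
  (1 <= M)%nat -> Cmod (inner_avg b a M q) <= K.
Proof.
  intros HM. unfold inner_avg. rewrite Cmod_scal, INR_pos_inv by lia.
  eapply Rle_trans. apply Rmult_le_compat_l.
  apply Rlt_le, Rinv_0_lt_compat, lt_0_INR; lia.
  eapply Rle_trans. apply Cmod_sum. apply (sum_const_le _ _ _ K).
  intros k _. rewrite Cmod_mult, Cmod_e. rewrite Rmult_1_l. apply HK.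
  replace (S M - 1)%nat with M by lia. assert (0 < INR M) by (apply lt_0_INR; lia).
  right. field. lra.
Qed.

Lemma inner_lip b K (HK : forall n, Cmod (b n) <= K) a t M q :
  (1 <= M)%nat ->
  Cmod (inner_avg b a M q) <= Cmod (inner_avg b t M q) + 4 * PI * INR M * K * Rabs (a - t).
Proof.
  intros HM. assert (HMp : 0 < INR M) by (apply lt_0_INR; lia).
  unfold inner_avg. rewrite !Cmod_scal, !INR_pos_inv by lia.
  set (B := fun m => Cmult (e (INR m * t)) (b (M * q + m)%nat)).
  set (D := fun m => Cmult (Cminus (e (INR m * a)) (e (INR m * t))) (b (M * q + m)%nat)).
  rewrite (sum_n_m_ext _ (fun m => plus (B m) (D m))).
  2:{ intros m. unfold B, D. apply Caux. }
  rewrite sum_n_m_plus. change (plus (sum_n_m B 1 M) (sum_n_m D 1 M)) with (Cplus (sum_n_m B 1 M) (sum_n_m D 1 M)).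
  assert (HD : Cmod (sum_n_m D 1 M) <= INR M * (4 * PI * INR M * K * Rabs (a - t))).
  { eapply Rle_trans. apply Cmod_sum. replace (INR M) with (INR (S M - 1)) at 1 by (f_equal; lia).
    apply sum_const_le. intros k Hk. unfold D. rewrite Cmod_mult.
    assert (K0 : 0 <= K) by (eapply Rle_trans; [apply Cmod_ge_0| apply (HK 0%nat)]).
    eapply Rle_trans. apply Rmult_le_compat. apply Cmod_ge_0. apply Cmod_ge_0. apply e_lip. apply HK.
    replace (INR k * a - INR k * t) with (INR k * (a - t)) by ring.
    rewrite Rabs_mult, (Rabs_right (INR k)) by (apply Rle_ge, pos_INR).
    assert (INR k <= INR M) by (apply le_INR; lia).
    pose proof PI_RGT_0. pose proof (Rabs_pos (a - t)).
    apply Rle_trans with (4*PI*(INR M * Rabs(a-t))*K).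
    - apply Rmult_le_compat_r; auto. apply Rmult_le_compat_l; [lra|]. apply Rmult_le_compat_r; auto.
    - right; ring. }
  pose proof (Cmod_triangle (sum_n_m B 1 M) (sum_n_m D 1 M)).
  assert (0 < / INR M) by (apply Rinv_0_lt_compat; lra).
  apply Rle_trans with (/ INR M * Cmod (sum_n_m B 1 M) + / INR M * (INR M * (4 * PI * INR M * K * Rabs (a - t)))).
  nra. right. field. lra.
Qed.

Definition fa (b : nat -> C) (a : R) (n : nat) : C := Cmult (e (INR n * a)) (b n).

Lemma blocks b a M : (1 <= M)%nat -> forall Q,
  sum_n_m (fa b a) (S M) (M * S Q) =
  sum_n_m (fun q => sum_n_m (fun m => fa b a (M * q + m)%nat) 1 M) 1 Q.
Proof.
  intros HM. induction Q.
  - rewrite !sum_n_m_zero by lia. reflexivity.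
  - rewrite (sum_n_m_Chasles _ (S M) (M * S Q) (M * S (S Q))) by nia.
    rewrite IHQ. rewrite (sum_n_Sm _ 1 Q) by lia. f_equal.
    replace (S (M * S Q)) with (M * S Q + 1)%nat by lia.
    replace (M * S (S Q))%nat with (M * S Q + M)%nat by lia.
    apply sum_shift.
Qed.

Lemma Caux3 x y z : Cmult (Cmult x y) z = Cmult x (Cmult y z).
Proof. ring. Qed.

Lemma block_mod b a M q : (1 <= M)%nat ->
  Cmod (sum_n_m (fun m => fa b a (M * q + m)%nat) 1 M) = INR M * Cmod (inner_avg b a M q).
Proof.
  intros HM. unfold inner_avg. rewrite Cmod_scal, INR_pos_inv by lia.
  rewrite (sum_n_m_ext _ (fun m => mult (e (INR (M * q) * a)) (Cmult (e (INR m * a)) (b (M * q + m)%nat)))).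
  2:{ intros m. unfold fa. rewrite plus_INR, Rmult_plus_distr_r, e_add.
      apply Caux3. }
  rewrite sum_n_m_mult_l. change mult with Cmult. rewrite Cmod_mult, Cmod_e.
  assert (0 < INR M) by (apply lt_0_INR; lia). rewrite <- Rmult_assoc, Rinv_r, !Rmult_1_l by lra. reflexivity.
Qed.

Lemma Cmod_fa_sum b K (HK : forall n, Cmod (b n) <= K) a n m :
  Cmod (sum_n_m (fa b a) n m) <= INR (S m - n) * K.
Proof.
  eapply Rle_trans. apply Cmod_sum. apply sum_const_le. intros k _.
  unfold fa. rewrite Cmod_mult, Cmod_e, Rmult_1_l. apply HK.
Qed.

Lemma sum_nonneg (u : nat -> R) n m : (forall k, 0 <= u k) -> 0 <= sum_n_m u n m.
Proof.
  intros H. eapply Rle_trans with (sum_n_m (fun _ => 0) n m).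
  rewrite sum_n_m_const; lra. apply sum_n_m_le. exact H.
Qed.

Lemma outer_nonneg b t M Q : 0 <= outer_avg b t M Q.
Proof.
  unfold outer_avg. apply Rmult_le_pos.
  destruct Q. change (INR 0) with 0. rewrite Rinv_0. lra. apply Rlt_le, Rinv_0_lt_compat, lt_0_INR; lia.
  apply sum_nonneg. intros; apply Cmod_ge_0.
Qed.

Lemma Caux2 A T H B : Cplus A T = Cplus H B -> A = Cminus (Cplus H B) T.
Proof. intros E. rewrite <- E. ring. Qed.

Lemma decomp b K (HK : forall n, Cmod (b n) <= K) a t M N :
  (1 <= M)%nat -> (M <= N)%nat ->
  Cmod (exp_avg b a N) <=
  outer_avg b t M (N / M) + 4 * PI * INR M * K * Rabs (a - t) + 2 * INR M * K / INR N.
Proof.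
  intros HM HMN.
  assert (K0 : 0 <= K) by (eapply Rle_trans; [apply Cmod_ge_0| apply (HK 0%nat)]).
  set (Q := (N / M)%nat).
  assert (HQ1 : (1 <= Q)%nat) by (apply Nat.div_le_lower_bound; lia).
  assert (HMQ : (M * Q <= N)%nat) by (apply Nat.Div0.mul_div_le).
  assert (HN2 : (N < M * Q + M)%nat).
  { pose proof (Nat.div_mod N M). pose proof (Nat.mod_upper_bound N M). fold Q in H. lia. }
  set (P := (M * S Q)%nat).
  set (c := 4 * PI * INR M * K * Rabs (a - t)).
  assert (Hc : 0 <= c).
  { unfold c. pose proof PI_RGT_0. pose proof (pos_INR M). pose proof (Rabs_pos (a - t)).
    apply Rmult_le_pos; auto. apply Rmult_le_pos; auto. apply Rmult_le_pos; lra. }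
  assert (E1 := sum_n_m_Chasles (fa b a) 1 N P ltac:(lia) ltac:(unfold P; nia)).
  assert (E2 := sum_n_m_Chasles (fa b a) 1 M P ltac:(lia) ltac:(unfold P; nia)).
  rewrite E1 in E2. change plus with Cplus in E2. apply Caux2 in E2.
  assert (HA : Cmod (sum_n_m (fa b a) 1 N) <=
     INR M * K + (INR M * INR Q * outer_avg b t M Q + INR M * INR Q * c) + INR M * K).
  { rewrite E2.
    set (H := sum_n_m (fa b a) 1 M). set (B := sum_n_m (fa b a) (S M) P). set (T := sum_n_m (fa b a) (S N) P).
    pose proof (Cmod_triangle (Cplus H B) (Copp T)) as T1. rewrite Cmod_opp in T1.
    pose proof (Cmod_triangle H B) as T2.
    assert (HH : Cmod H <= INR M * K).
    { unfold H. eapply Rle_trans. apply Cmod_fa_sum; auto. replace (S M - 1)%nat with M by lia. lra. }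
    assert (HT : Cmod T <= INR M * K).
    { unfold T. eapply Rle_trans. apply Cmod_fa_sum; auto. apply Rmult_le_compat_r; auto.
      apply le_INR. unfold P. nia. }
    assert (HB : Cmod B <= INR M * INR Q * outer_avg b t M Q + INR M * INR Q * c).
    { unfold B, P. rewrite blocks by lia. eapply Rle_trans. apply Cmod_sum.
      rewrite (sum_n_m_ext _ (fun q => INR M * Cmod (inner_avg b a M q))).
      2:{ intros q. apply block_mod. lia. }
      eapply Rle_trans. apply sum_n_m_le with (b := fun q => plus (mult (INR M) (Cmod (inner_avg b t M q))) (INR M * c)).
      { intros q. change plus with Rplus. change mult with Rmult.
        pose proof (inner_lip b K HK a t M q HM). fold c in H0. pose proof (pos_INR M). nra. }
      rewrite sum_n_m_plus, (sum_n_m_mult_l (K:=R_Ring)), sum_n_m_const.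
      replace (S Q - 1)%nat with Q by lia.
      change plus with Rplus. change mult with Rmult.
      assert (0 < INR Q) by (apply lt_0_INR; lia).
      unfold outer_avg. right. rewrite (Rmult_assoc (INR M) (INR Q)), <- (Rmult_assoc (INR Q) (/ INR Q)), Rinv_r, Rmult_1_l by lra. f_equal; try reflexivity; ring. }
    change (Cminus (Cplus H B) T) with (Cplus (Cplus H B) (Copp T)).
    lra. }
  unfold exp_avg. rewrite Cmod_scal.
  assert (0 < INR N) by (apply lt_0_INR; lia).
  rewrite Rabs_right by (apply Rle_ge, Rlt_le, Rinv_0_lt_compat; lra).
  change (sum_n_m (fun n : nat => (e (INR n * a) * b n)%C) 1 N) with (sum_n_m (fa b a) 1 N).
  assert (HMQr : INR M * INR Q <= INR N) by (rewrite <- mult_INR; apply le_INR; lia).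
  pose proof (outer_nonneg b t M Q).
  apply Rle_trans with (/ INR N * (INR M * K + (INR M * INR Q * outer_avg b t M Q + INR M * INR Q * c) + INR M * K)).
  { apply Rmult_le_compat_l; auto. apply Rlt_le, Rinv_0_lt_compat; lra. }
  fold Q c.
  assert (INR M * INR Q * (outer_avg b t M Q + c) <= INR N * (outer_avg b t M Q + c)) by nra.
  apply Rle_trans with (/ INR N * (INR N * (outer_avg b t M Q + c)) + 2 * INR M * K / INR N).
  { unfold Rdiv. assert (0 < / INR N) by (apply Rinv_0_lt_compat; lra). nra. }
  right. field. lra.
Qed.

Lemma outer_le b K (HK : forall n, Cmod (b n) <= K) a M N :
  (1 <= M)%nat -> outer_avg b a M N <= K.
Proof.
  intros HM.
  assert (K0 : 0 <= K) by (eapply Rle_trans; [apply Cmod_ge_0| apply (HK 0%nat)]).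
  unfold outer_avg. destruct N.
  - rewrite sum_n_m_zero by lia. change (INR 0) with 0. rewrite Rinv_0. unfold zero; simpl. lra.
  - assert (0 < INR (S N)) by (apply lt_0_INR; lia).
    apply Rle_trans with (/ INR (S N) * (INR (S (S N) - 1) * K)).
    + apply Rmult_le_compat_l. apply Rlt_le, Rinv_0_lt_compat; lra.
      apply sum_const_le. intros; apply (inner_bound b K HK); auto.
    + replace (S (S N) - 1)%nat with (S N) by lia. right. field. lra.
Qed.

Lemma local b K (HK : forall n, Cmod (b n) <= K)
  (H2 : forall alpha : R, 0 <= alpha <= 1 ->
     is_lim_seq (fun M : nat => real (LimSup_seq (fun N : nat => outer_avg b alpha M N))) 0)
  a (Ha : 0 <= a <= 1) (eps : R) (Heps : 0 < eps) :
  exists M N0, (1 <= M)%nat /\ forall N, (N0 <= N)%nat -> outer_avg b a M N < eps.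
Proof.
  destruct (proj2 (is_lim_seq_spec _ _) (H2 a Ha) (mkposreal eps Heps)) as [M0 HM0].
  specialize (HM0 (S M0) ltac:(lia)). simpl in HM0.
  set (u := fun N => outer_avg b a (S M0) N) in HM0.
  assert (HL : is_LimSup_seq u (LimSup_seq u)) by (unfold LimSup_seq; destruct ex_LimSup_seq; simpl; auto).
  exists (S M0).
  destruct (LimSup_seq u) as [l| |].
  - simpl in HM0. rewrite Rminus_0_r in HM0. apply Rabs_def2 in HM0.
    assert (Hp : 0 < eps - l) by lra.
    destruct (HL (mkposreal _ Hp)) as [_ [N0 HN0]]. exists N0. split. lia.
    intros N HN. specialize (HN0 N HN). simpl in HN0. unfold u in HN0. lra.
  - exfalso. destruct (HL K 0%nat) as [n [_ Hn]]. unfold u in Hn.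
    pose proof (outer_le b K HK a (S M0) n ltac:(lia)). lra.
  - destruct (HL eps) as [N0 HN0]. exists N0. split. lia. intros N HN. apply (HN0 N HN).
Qed.

Lemma lub_bd (E : R -> Prop) c y0 : E y0 -> (forall y, E y -> 0 <= y <= c) ->
  0 <= real (Lub_Rbar E) <= c.
Proof.
  intros Hy0 HE. destruct (Lub_Rbar_correct E) as [Hub Hl].
  assert (H1 : Rbar_le (Lub_Rbar E) c).
  { apply Hl. intros x Hx. simpl. apply HE; auto. }
  pose proof (Hub y0 Hy0) as H0. pose proof (HE y0 Hy0).
  destruct (Lub_Rbar E) as [l| |]; simpl in *; try contradiction. lra.
Qed.

Theorem lemma2p2 (b : nat -> C) :
  (exists K : R, forall n : nat, Cmod (b n) <= K) ->
  (forall alpha : R, 0 <= alpha <= 1 ->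
     is_lim_seq (fun M : nat => real (LimSup_seq (fun N : nat => outer_avg b alpha M N))) 0) ->
  is_lim_seq
    (fun N : nat => real (Lub_Rbar (fun y : R =>
        exists alpha : R, 0 <= alpha <= 1 /\ y = Cmod (exp_avg b alpha N))))
    0.
Proof.
  intros [K HK] H2.
  assert (K0 : 0 <= K) by (eapply Rle_trans; [apply Cmod_ge_0| apply (HK 0%nat)]).
  apply is_lim_seq_spec. intros eps.
  set (ep := eps / 4). assert (Hep : 0 < ep) by (unfold ep; destruct eps; simpl; lra).
  assert (Hloc : forall a, exists p : nat * nat, 0 <= a <= 1 ->
     (1 <= fst p)%nat /\ forall N, (snd p <= N)%nat -> outer_avg b a (fst p) N < ep).
  { intros a. destruct (classic (0 <= a <= 1)) as [Ha|Ha].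
    - destruct (local b K HK H2 a Ha ep Hep) as [M [N0 [HM HN]]]. exists (M, N0). intros _; auto.
    - exists (1%nat, 0%nat). intros; contradiction. }
  set (g := fun a => proj1_sig (constructive_indefinite_description _ (Hloc a))).
  assert (Hg : forall a, 0 <= a <= 1 ->
     (1 <= fst (g a))%nat /\ forall N, (snd (g a) <= N)%nat -> outer_avg b a (fst (g a)) N < ep).
  { intros a. unfold g. destruct constructive_indefinite_description as [p Hp]. simpl. exact Hp. }
  assert (PIp := PI_RGT_0).
  assert (dpos : forall a, 0 < Rmin (ep / (4 * PI * INR (fst (g a)) * K + 1)) (/ (INR (snd (g a) + fst (g a)) + 1))).
  { intros a. pose proof (pos_INR (fst (g a))). pose proof (pos_INR (snd (g a) + fst (g a))).
    apply Rmin_pos. apply Rdiv_lt_0_compat; auto.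
    assert (0 <= 4 * PI * INR (fst (g a)) * K).
    { apply Rmult_le_pos; auto. apply Rmult_le_pos; lra. } lra.
    apply Rinv_0_lt_compat; lra. }
  set (delta := fun a => mkposreal _ (dpos a)).
  destruct (compactness_value_1d 0 1 delta) as [d Hd].
  set (B := / d). assert (Bp : 0 < B) by (unfold B; apply Rinv_0_lt_compat; destruct d; simpl; lra).
  assert (X0 : 0 <= B * B + 2 * B * K / ep).
  { apply Rplus_le_le_0_compat. nra. unfold Rdiv. apply Rmult_le_pos. nra. apply Rlt_le, Rinv_0_lt_compat; lra. }
  destruct (nfloor_ex _ X0) as [n0 Hn0].
  exists (S n0). intros N HN.
  assert (HNr : B * B + 2 * B * K / ep < INR N).
  { apply Rlt_le_trans with (INR (S n0)). rewrite S_INR; lra. apply le_INR; lia. }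
  assert (Hkey : forall a, 0 <= a <= 1 -> Cmod (exp_avg b a N) <= 3 * ep).
  { intros a Ha. apply NNPP; intro Hneg. apply (Hd a Ha). intros [t [Ht [Hat Hdt]]]. apply Hneg.
    destruct (Hg t Ht) as [HM1 HN0].
    set (M := fst (g t)) in *. set (NN := snd (g t)) in *.
    simpl in Hat, Hdt.
    pose proof (Rmin_l (ep / (4 * PI * INR M * K + 1)) (/ (INR (NN + M) + 1))) as R1.
    pose proof (Rmin_r (ep / (4 * PI * INR M * K + 1)) (/ (INR (NN + M) + 1))) as R2.
    fold M NN in R1, R2, Hat, Hdt.
    assert (HB1 : INR (NN + M) + 1 <= B).
    { unfold B. rewrite <- (Rinv_inv (INR (NN + M) + 1)). apply Rinv_le_contravar.
      destruct d; simpl; lra. pose proof (pos_INR (NN + M)). lra. }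
    rewrite plus_INR in HB1.
    assert (HMB : INR M <= B) by (pose proof (pos_INR NN); lra).
    assert (HNB : INR (S NN) <= B) by (rewrite S_INR; assert (1 <= INR M) by (change 1 with (INR 1); apply le_INR; lia); lra).
    assert (HMN : (M * S NN <= N)%nat).
    { apply INR_le. rewrite mult_INR. assert (0 <= 2 * B * K / ep).
      { unfold Rdiv. apply Rmult_le_pos. nra. apply Rlt_le, Rinv_0_lt_compat; lra. }
      pose proof (pos_INR M). pose proof (pos_INR (S NN)). nra. }
    assert (HQ : (NN <= N / M)%nat) by (apply Nat.div_le_lower_bound; lia).
    pose proof (decomp b K HK a t M N HM1 ltac:(nia)) as HD.
    pose proof (HN0 (N / M)%nat HQ) as HO.
    assert (Hc : 4 * PI * INR M * K * Rabs (a - t) < ep).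
    { assert (0 <= 4 * PI * INR M * K).
      { apply Rmult_le_pos; auto. apply Rmult_le_pos; [lra| apply pos_INR]. }
      assert (Hat' : Rabs (a - t) < ep / (4 * PI * INR M * K + 1)) by lra.
      apply Rmult_lt_compat_l with (r := 4 * PI * INR M * K + 1) in Hat'; [|lra].
      replace ((4 * PI * INR M * K + 1) * (ep / (4 * PI * INR M * K + 1))) with ep in Hat' by (field; lra).
      pose proof (Rabs_pos (a - t)). nra. }
    assert (HNp : 0 < INR N) by (pose proof (pos_INR M); nra).
    assert (Ht2 : 2 * INR M * K / INR N < ep).
    { apply Rmult_lt_reg_r with (INR N); auto. unfold Rdiv. rewrite Rmult_assoc, Rinv_l by lra.
      assert (2 * B * K < ep * INR N).
      { assert (2 * B * K / ep < INR N) by (assert (0 <= B * B) by nra; lra).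
        apply Rmult_lt_compat_l with (r := ep) in H; auto.
        replace (ep * (2 * B * K / ep)) with (2 * B * K) in H by (field; lra). lra. }
      nra. }
    lra. }
  rewrite Rminus_0_r.
  assert (HL : 0 <= real (Lub_Rbar (fun y : R => exists alpha : R, 0 <= alpha <= 1 /\ y = Cmod (exp_avg b alpha N))) <= 3 * ep).
  { apply lub_bd with (y0 := Cmod (exp_avg b 0 N)).
    - exists 0. split; [lra| reflexivity].
    - intros y [a [Ha ->]]. split. apply Cmod_ge_0. apply Hkey; auto. }
  rewrite Rabs_right by lra. unfold ep in HL. destruct eps; simpl in *; lra.
Qed.
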